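(* $\mathrm{WL}_{3/2}\not\preceq\omega^{(\bullet)}$: there exist graphs $G$ and $H$ with $\omega^{(\bullet)}(G)=\omega^{(\bullet)}(H)$ (hence $\omega^{(r)}(G)=\omega^{(r)}(H)$ for every $r$) but $\mathrm{WL}_{3/2}(G)\ne\mathrm{WL}_{3/2}(H)$. (For instance, $G=G(A',B')$ and $H=G(A',A')$ where $A$ is the Shrikhande graph, $B$ the $4\times4$ rook's graph, each with one individualized port vertex.)
   Context: Graphs are finite, simple and undirected. Walk invariants: $w_k(x,y)$ = number of walks of length $k$ from $x$ to $y$ in an $N$-vertex graph, $w_*(x,y)=(w_0(x,y),\dots,w_{N-1}(x,y))$; $\omega_0(x)=w_*(x,x)$, $\omega_{r+1}(x)=\big(\omega_r(x),\{\!\{(w_*(x,y),\omega_r(y))\}\!\}_{y}\big)$ ($\{\!\{\cdot\}\!\}$ = multiset); $\omega^{(r)}(G)=\{\!\{\omega_r(x)\}\!\}_{x\in V(G)}$ and $\omega^{(\bullet)}(G)=\omega^{(N)}(G)$. Color refinement on a vertex-colored $N$-vertex graph: $C^0(x)$ is the color of $x$ (uniform if uncolored), $C^{r+1}(x)=\big(C^r(x),\{\!\{C^r(y)\}\!\}_{y\in N(x)}\big)$, $\mathrm{WL}_1(X)=\{\!\{C^N(x)\}\!\}_x$. $G_x$ is $G$ with $x$ given a special new color (same for all $x$); $\mathrm{WL}_{3/2}(G)=\{\!\{\mathrm{WL}_1(G_x)\}\!\}_{x\in V(G)}$. Construction $G(A',B')$ for graphs $A,B$ with individualized vertices $a_1,b_1$: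 the vertex-disjoint union of $A$ and $B$ plus a vertex $c_1$ adjacent to $a_1$ and $b_1$, plus a pendant vertex adjacent only to $c_1$; no colors. *)

(* Defs.v *)
From mathcomp Require Import all_boot.
Set Implicit Arguments. Unset Strict Implicit. Unset Printing Implicit Defensive.

Definition simple_graph (T : finType) (e : rel T) : Prop :=
  symmetric e /\ irreflexive e.

(* Universal value type for invariants/colors: finitely branching trees
   (a countType). *)
Notation val := (GenTree.tree nat).

(* Canonical representative of a finite multiset of values: the list sorted
   along the injective encoding [pickle].  msort s = msort t <-> perm_eq s t. *)
Definition msort (s : seq val) : seq val :=
  sort (fun a b : val => pickle a <= pickle b) s.

Definition enc_seq (s : seq nat) : val := GenTree.Node 0 (map (@GenTree.Leaf nat) s).
Definition enc_pair (a b : val) : val := GenTree.Node 1 [:: a; b].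
Definition enc_mset (s : seq val) : val := GenTree.Node 2 (msort s).

Section Walks.
Variables (T : finType) (e : rel T).

Fixpoint walks (k : nat) (x y : T) : nat :=
  match k with
  | 0 => (x == y : nat)
  | k'.+1 => \sum_(z : T | e x z) walks k' z y
  end.

Definition wstar (x y : T) : seq nat := [seq walks k x y | k <- iota 0 #|T|].

Fixpoint omega (r : nat) (x : T) : val :=
  match r with
  | 0 => enc_seq (wstar x x)
  | r'.+1 => enc_pair (omega r' x)
               (enc_mset [seq enc_pair (enc_seq (wstar x y)) (omega r' y) | y <- enum T])
  end.

Definition omega_graph (r : nat) : val := enc_mset [seq omega r x | x <- enum T].
Definition omega_bullet : val := omega_graph #|T|.

Fixpoint cref (c : T -> val) (r : nat) (x : T) : val :=
  match r with
  | 0 => c x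
  | r'.+1 => enc_pair (cref c r' x)
               (enc_mset [seq cref c r' y | y <- enum T & e x y])
  end.

Definition WL1 (c : T -> val) : val := enc_mset [seq cref c #|T| x | x <- enum T].

Definition indiv_color (x : T) : T -> val := fun y => GenTree.Leaf (y == x : nat).

Definition WL32 : val := enc_mset [seq WL1 (indiv_color x) | x <- enum T].

End Walks.

(* Main.v *)
Require Import Defs.
From mathcomp Require Import all_boot.
From Stdlib Require Import NArith.
Set Implicit Arguments. Unset Strict Implicit. Unset Printing Implicit Defensive.
Notation vt := (GenTree.tree nat).

Lemma msort_perm (s t : seq vt) : perm_eq s t -> msort s = msort t.
Proof.
move=> st; apply/perm_sortP => //.
- by move=> a b; apply: leq_total.
- by move=> a b c; apply: leq_trans.
- by move=> a b /anti_leq /(pcan_inj pickleK).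
Qed.

Lemma perm_eq_via (T1 T2 : finType) (P : eqType) (p1 : T1 -> P) (p2 : T2 -> P)
  (c1 : T1 -> nat) (c2 : T2 -> nat) (f1 : T1 -> vt) (f2 : T2 -> vt) :
  (forall x y, c1 x = c2 y -> f1 x = f2 y) ->
  (forall x, exists y, c1 x = c2 y) -> (forall y, exists x, c1 x = c2 y) ->
  perm_eq [seq (p1 z, c1 z) | z <- enum T1] [seq (p2 z, c2 z) | z <- enum T2] ->
  perm_eq [seq (p1 z, f1 z) | z <- enum T1] [seq (p2 z, f2 z) | z <- enum T2].
Proof.
move=> Hf s12 s21 Hp.
pose G c := if [pick z | c2 z == c] is Some z then f2 z else GenTree.Leaf 0.
have G2 z : f2 z = G (c2 z).
  rewrite /G; case: pickP => [z' /eqP h|/(_ z)]; last by rewrite eqxx.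
  have [x hx] := s21 z; rewrite -(Hf _ _ hx) (Hf x z') //; congruence.
have G1 z : f1 z = G (c1 z).
  by have [y hy] := s12 z; rewrite (Hf _ _ hy) G2 hy.
pose F (q : P * nat) := (q.1, G q.2).
have -> : [seq (p1 z, f1 z) | z <- enum T1] = map F [seq (p1 z, c1 z) | z <- enum T1].
  by rewrite -map_comp; apply: eq_map => z; rewrite /F /= G1.
have -> : [seq (p2 z, f2 z) | z <- enum T2] = map F [seq (p2 z, c2 z) | z <- enum T2].
  by rewrite -map_comp; apply: eq_map => z; rewrite /F /= G2.
exact: perm_map.
Qed.

Lemma omega_cert (T1 T2 : finType) (e1 : rel T1) (e2 : rel T2)
  (c1 : T1 -> nat) (c2 : T2 -> nat) :
  (forall x y, c1 x = c2 y -> wstar e1 x x = wstar e2 y y) ->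
  (forall x y, c1 x = c2 y ->
     perm_eq [seq (wstar e1 x z, c1 z) | z <- enum T1]
             [seq (wstar e2 y z, c2 z) | z <- enum T2]) ->
  (forall x, exists y, c1 x = c2 y) -> (forall y, exists x, c1 x = c2 y) ->
  forall r x y, c1 x = c2 y -> omega e1 r x = omega e2 r y.
Proof.
move=> H0 H1 s12 s21; elim=> [|r IH] x y cxy /=; first by rewrite (H0 _ _ cxy).
rewrite (IH _ _ cxy) /enc_mset; congr (enc_pair _ (GenTree.Node 2 _)).
apply: msort_perm.
pose F (q : seq nat * vt) := enc_pair (enc_seq q.1) q.2.
rewrite (_ : [seq _ | y0 <- enum T1] = map F [seq (wstar e1 x z, omega e1 r z) | z <- enum T1]);
  last by rewrite -map_comp.
rewrite (_ : [seq _ | y0 <- enum T2] = map F [seq (wstar e2 y z, omega e2 r z) | z <- enum T2]);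
  last by rewrite -map_comp.
apply: perm_map; apply: perm_eq_via => //; [exact: IH | exact: (H1 _ _ cxy)].
Qed.

Lemma omega_bullet_cert (T1 T2 : finType) (e1 : rel T1) (e2 : rel T2)
  (c1 : T1 -> nat) (c2 : T2 -> nat) :
  #|T1| = #|T2| ->
  (forall x y, c1 x = c2 y -> wstar e1 x x = wstar e2 y y) ->
  (forall x y, c1 x = c2 y ->
     perm_eq [seq (wstar e1 x z, c1 z) | z <- enum T1]
             [seq (wstar e2 y z, c2 z) | z <- enum T2]) ->
  (forall x, exists y, c1 x = c2 y) -> (forall y, exists x, c1 x = c2 y) ->
  perm_eq [seq (tt, c1 z) | z <- enum T1] [seq (tt, c2 z) | z <- enum T2] ->
  omega_bullet e1 = omega_bullet e2.
Proof.
move=> hN H0 H1 s12 s21 hc; rewrite /omega_bullet /omega_graph /enc_mset hN.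
congr (GenTree.Node 2 _); apply: msort_perm.
have := perm_eq_via (f1 := fun z => omega e1 #|T2| z) (f2 := fun z => omega e2 #|T2| z)
  (omega_cert H0 H1 s12 s21 #|T2|) s12 s21 hc.
by move/(perm_map snd); rewrite -!map_comp.
Qed.

Lemma nat_of_addN (a b : N) : nat_of_bin (N.add a b) = nat_of_bin a + nat_of_bin b.
Proof.
case: a => [|p]; case: b => [|q] //=; first by rewrite addn0.
exact: nat_of_add_pos.
Qed.

Definition sumN (s : seq N) : N := foldr N.add 0%num s.

Lemma sumNE s : nat_of_bin (sumN s) = sumn (map nat_of_bin s).
Proof. by elim: s => //= a s IH; rewrite nat_of_addN IH. Qed.

Lemma sumN_perm s t : perm_eq s t -> sumN s = sumN t.
Proof.
move=> st; rewrite -[sumN s]nat_of_binK -[sumN t]nat_of_binK !sumNE.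
by rewrite (perm_sumn (perm_map _ st)).
Qed.

Definition M31 : N := 2147483647%num.
Definition mx (a : N) : N :=
  let b := N.land a M31 in N.land (b * b + b * 2654435761 + 12345)%num M31.
Definition hn (k : nat) (ls : seq N) : N :=
  foldl (fun acc s => mx (acc * 1315423 + s)%num) (bin_of_nat k + 17)%num ls.
Definition hh (ls : seq N) : N := mx (sumN (map mx ls) + 99)%num.
Fixpoint sig (t : vt) : N :=
  match t with
  | GenTree.Leaf n => bin_of_nat n
  | GenTree.Node k l => let ls := map sig l in if k == 2 then hh ls else hn k ls
  end.

Lemma hh_perm s t : perm_eq s t -> hh s = hh t.
Proof. by move=> st; rewrite /hh (sumN_perm (perm_map _ st)). Qed.

Lemma sig_mset s : sig (enc_mset s) = hh (map sig s).
Proof. by apply: hh_perm; rewrite perm_map // perm_sort. Qed.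

Lemma sig_pair a b : sig (enc_pair a b) = hn 1 [:: sig a; sig b].
Proof. by []. Qed.

Definition mkord n (i : nat) : 'I_n.+1 :=
  (if i < n.+1 as b return (i < n.+1 = b -> 'I_n.+1) then fun h => Ordinal h
   else fun _ => ord0) (erefl _).

Lemma mkordK n (x : 'I_n.+1) : mkord n x = x.
Proof.
rewrite /mkord; move: (erefl (x < n.+1)).
case: {2 3}(x < n.+1) => h; first by apply: val_inj.
by rewrite ltn_ord in h.
Qed.

Lemma mkord_val n i : i < n.+1 -> nat_of_ord (mkord n i) = i.
Proof.
move=> hi; rewrite /mkord; move: (erefl (i < n.+1)).
by case: {2 3}(i < n.+1) => h //; rewrite hi in h.
Qed.

Definition L n : seq 'I_n.+1 := map (mkord n) (iota 0 n.+1).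

Lemma L_nth n (x : 'I_n.+1) : nth ord0 (L n) x = x.
Proof. by rewrite (nth_map 0) ?size_iota ?ltn_ord // nth_iota ?ltn_ord // add0n mkordK. Qed.

Lemma L_mem n (x : 'I_n.+1) : x \in L n.
Proof. by rewrite -(L_nth x) mem_nth // size_map size_iota ltn_ord. Qed.

Lemma L_perm n : perm_eq (L n) (enum 'I_n.+1).
Proof.
apply: uniq_perm; last by move=> x; rewrite mem_enum L_mem.
  rewrite map_inj_in_uniq ?iota_uniq // => i j; rewrite !mem_iota !add0n => hi hj h.
  by rewrite -(mkord_val hi) -(mkord_val hj) h.
exact: enum_uniq.
Qed.

Definition get n (v : seq N) (x : 'I_n.+1) : N := nth 0%num v x.

Lemma get_map n (F : 'I_n.+1 -> N) x : get (map F (L n)) x = F x.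
Proof. by rewrite /get (nth_map ord0) ?L_nth // size_map size_iota ltn_ord. Qed.

Section S.
Variables (n : nat) (e : rel 'I_n.+1).

Definition adj : seq (seq 'I_n.+1) := [seq filter (e x) (L n) | x : 'I_n.+1 <- L n].
Lemma adj_nth (x : 'I_n.+1) : nth [::] adj x = filter (e x) (L n).
Proof. by rewrite (nth_map ord0) ?L_nth // size_map size_iota ltn_ord. Qed.

Definition wstepL (a : seq (seq 'I_n.+1)) (v : seq N) : seq N :=
  [seq sumN [seq get v z | z : 'I_n.+1 <- nth [::] a x] | x : 'I_n.+1 <- L n].
Definition v0L (y : 'I_n.+1) : seq N := [seq if x == y then 1%num else 0%num | x : 'I_n.+1 <- L n].

Lemma wstepL_iter k (y x : 'I_n.+1) :
  nat_of_bin (get (iter k (wstepL adj) (v0L y)) x) = walks e k x y.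
Proof.
elim: k x => [|k IH] x /=; first by rewrite get_map; case: eqP.
rewrite get_map sumNE adj_nth -map_comp.
rewrite (eq_map (g := fun z => walks e k z y)); last by move=> z /=; rewrite IH.
rewrite sumnE big_map big_filter (perm_big _ (L_perm n)) /=.
by rewrite big_enum_cond.
Qed.

Definition TableL (a : seq (seq 'I_n.+1)) : seq (seq (seq N)) :=
  [seq let tr := traject (wstepL a) (v0L y) n.+1 in
       [seq [seq get v x | v <- tr] | x : 'I_n.+1 <- L n] | y : 'I_n.+1 <- L n].
Definition tab (t : seq (seq (seq N))) (y x : 'I_n.+1) := nth [::] (nth [::] t y) x.

Lemma tabE (x y : 'I_n.+1) : wstar e x y = map nat_of_bin (tab (TableL adj) y x).
Proof.
rewrite /tab /TableL (nth_map ord0) ?size_map ?size_iota ?ltn_ord // L_nth.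
rewrite (nth_map ord0) ?size_map ?size_iota ?ltn_ord // L_nth.
rewrite /wstar card_ord -map_comp.
have -> : traject (wstepL adj) (v0L y) n.+1
          = [seq iter k (wstepL adj) (v0L y) | k <- iota 0 n.+1].
  elim: n.+1 (v0L y) => // m IH v; rewrite trajectS IH /=.
  have -> : iota 1 m = map (addn 1) (iota 0 m) by rewrite -iotaDl.
  rewrite -map_comp.
  by congr (_ :: _); apply: eq_map => k /=; rewrite add0n -iterSr iterS.
by rewrite -map_comp; apply: eq_map => k /=; rewrite wstepL_iter.
Qed.

Definition cstepL (a : seq (seq 'I_n.+1)) (f : seq N) : seq N :=
  [seq hn 1 [:: get f x; hh [seq get f y | y : 'I_n.+1 <- nth [::] a x]] | x : 'I_n.+1 <- L n].

Lemma cstepL_iter (c : 'I_n.+1 -> vt) r (x : 'I_n.+1) :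
  get (iter r (cstepL adj) (map (fun y => sig (c y)) (L n))) x = sig (cref e c r x).
Proof.
elim: r x => [|r IH] x; first by rewrite /= get_map.
have -> : cref e c r.+1 x = enc_pair (cref e c r x)
             (enc_mset [seq cref e c r y | y <- enum 'I_n.+1 & e x y]) by [].
rewrite iterS get_map sig_pair sig_mset; congr (hn 1 [:: _; _]); first exact (IH x).
rewrite adj_nth; apply: hh_perm.
set F := iter r _ _.
have -> : [seq get F y | y : 'I_n.+1 <- filter (e x) (L n)]
        = [seq sig (cref e c r y) | y <- filter (e x) (L n)].
  by apply: eq_map => y; exact: IH.
rewrite -map_comp.
exact/perm_map/perm_filter/L_perm.
Qed.

Definition WL32SL (a : seq (seq 'I_n.+1)) : N :=
  hh [seq hh (let f := iter n.+1 (cstepL a) (map (fun y => sig (indiv_color x y)) (L n)) in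
              [seq get f y | y : 'I_n.+1 <- L n]) | x : 'I_n.+1 <- L n].

Lemma WL32SLE : sig (WL32 e) = WL32SL adj.
Proof.
rewrite /WL32 sig_mset /WL32SL -map_comp.
have -> : [seq hh (let f := iter n.+1 (cstepL adj) (map (fun y => sig (indiv_color x y)) (L n)) in
              [seq get f y | y : 'I_n.+1 <- L n]) | x : 'I_n.+1 <- L n]
        = [seq (sig \o (fun x => WL1 e (indiv_color x))) x | x <- L n].
  apply: eq_map => x; rewrite /comp /WL1 sig_mset -map_comp card_ord.
  have -> : [seq get (iter n.+1 (cstepL adj)
                   (map (fun y => sig (indiv_color x y)) (L n))) y | y : 'I_n.+1 <- L n]
          = [seq (sig \o (cref e (indiv_color x) n.+1)) y | y <- L n].
    by apply: eq_map => y; rewrite cstepL_iter.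
  by apply: hh_perm; apply: perm_map; first [exact: L_perm | rewrite perm_sym; exact: L_perm].
by apply: hh_perm; apply: perm_map; first [exact: L_perm | rewrite perm_sym; exact: L_perm].
Qed.

End S.

Fixpoint lexN (a b : seq N) : bool :=
  match a, b with
  | [::], _ => true
  | _ :: _, [::] => false
  | x :: a', y :: b' => N.ltb x y || (N.eqb x y && lexN a' b')
  end.
Definition leP (p q : seq N * nat) : bool :=
  (p.2 < q.2) || ((p.2 == q.2) && lexN p.1 q.1).

Section Cert.
Variable n : nat.

Definition sigv (t : seq (seq (seq N))) (c : 'I_n.+1 -> nat) (x : 'I_n.+1) :=
  sort leP [seq (tab t z x, c z) | z : 'I_n.+1 <- L n].

Definition cert (a1 a2 : seq (seq 'I_n.+1)) (c1 c2 : 'I_n.+1 -> nat) : bool :=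
  let t1 := TableL a1 in let t2 := TableL a2 in
  let s1 := [seq sigv t1 c1 x | x : 'I_n.+1 <- L n] in
  let s2 := [seq sigv t2 c2 x | x : 'I_n.+1 <- L n] in
  [&& all (fun x : 'I_n.+1 => all (fun y : 'I_n.+1 => (c1 x == c2 y) ==>
          ((tab t1 x x == tab t2 y y) && (nth [::] s1 x == nth [::] s2 y))) (L n)) (L n),
      all (fun x => has (fun y => c1 x == c2 y) (L n)) (L n),
      all (fun y => has (fun x => c1 x == c2 y) (L n)) (L n) &
      perm_eq [seq (tt, c1 z) | z <- L n] [seq (tt, c2 z) | z <- L n]].

Lemma Lmap_perm (A : eqType) (f : 'I_n.+1 -> A) :
  perm_eq (map f (L n)) (map f (enum 'I_n.+1)).
Proof. exact/perm_map/L_perm. Qed.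

Lemma cert_ok (e1 e2 : rel 'I_n.+1) c1 c2 :
  cert (adj e1) (adj e2) c1 c2 -> omega_bullet e1 = omega_bullet e2.
Proof.
rewrite /cert => /and4P [/allP H /allP h12 /allP h21 hc].
have H' x y : c1 x = c2 y -> (tab (TableL (adj e1)) x x == tab (TableL (adj e2)) y y)
   && (sigv (TableL (adj e1)) c1 x == sigv (TableL (adj e2)) c2 y).
  move=> cxy; have /allP /(_ y (L_mem y)) := H x (L_mem x).
  rewrite cxy eqxx implyTb !(nth_map ord0) ?size_map ?size_iota ?ltn_ord // !L_nth.
  by [].
apply: (omega_bullet_cert (c1 := c1) (c2 := c2)) => //.
- move=> x y /H' /andP [/eqP h _]; by rewrite !tabE h.
- move=> x y /H' /andP [_ /eqP h].
  pose g (p : seq N * nat) := (map nat_of_bin p.1, p.2).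
  have -> : [seq (wstar e1 x z, c1 z) | z <- enum 'I_n.+1]
          = map g [seq (tab (TableL (adj e1)) z x, c1 z) | z <- enum 'I_n.+1].
    by rewrite -map_comp; apply: eq_map => z; rewrite /g /= tabE.
  have -> : [seq (wstar e2 y z, c2 z) | z <- enum 'I_n.+1]
          = map g [seq (tab (TableL (adj e2)) z y, c2 z) | z <- enum 'I_n.+1].
    by rewrite -map_comp; apply: eq_map => z; rewrite /g /= tabE.
  apply: perm_map.
  apply: perm_trans (Lmap_perm (fun z => (tab (TableL (adj e2)) z y, c2 z))).
  rewrite perm_sym.
  apply: perm_trans (Lmap_perm (fun z => (tab (TableL (adj e1)) z x, c1 z))).
  rewrite perm_sym -(perm_sort leP) /sigv in h *.
  by rewrite h perm_sort.
- move=> x; have /hasP [y _ /eqP h] := h12 x (L_mem x); by exists y.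
- move=> y; have /hasP [x _ /eqP h] := h21 y (L_mem y); by exists x.
apply: perm_trans (Lmap_perm (fun z => (tt, c2 z))).
rewrite perm_sym; apply: perm_trans (Lmap_perm (fun z => (tt, c1 z))).
by rewrite perm_sym.
Qed.
End Cert.

Definition shrik (u v : nat) : bool :=
  let da := (u %/ 4 + 4 - v %/ 4) %% 4 in let db := (u %% 4 + 4 - v %% 4) %% 4 in
  (da, db) \in [:: (1,0); (3,0); (0,1); (0,3); (1,1); (3,3)].
Definition rook (u v : nat) : bool := (u != v) && ((u %/ 4 == v %/ 4) || (u %% 4 == v %% 4)).
Definition gadj (X Y : nat -> nat -> bool) (u v : nat) : bool :=
  if (u < 16) && (v < 16) then X u v
  else if (16 <= u < 32) && (16 <= v < 32) then Y (u - 16) (v - 16)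
  else (u, v) \in [:: (0,32); (32,0); (16,32); (32,16); (32,33); (33,32)].
Definition eG : rel 'I_34 := fun i j => gadj shrik rook i j.
Definition eH : rel 'I_34 := fun i j => gadj shrik shrik i j.
Definition cls (X Y : nat -> nat -> bool) (i : 'I_34) : nat :=
  let u := nat_of_ord i in
  if u == 32 then 3 else if u == 33 then 4 else if (u == 0) || (u == 16) then 0
  else if u < 16 then (if X u 0 then 1 else 2) else (if Y (u - 16) 0 then 1 else 2).

Lemma simple_check (e : rel 'I_34) :
  all (fun x => ~~ e x x && all (fun y => e x y == e y x) (L 33)) (L 33) -> simple_graph e.
Proof.
move/allP=> h; split.
- move=> x y; have /andP [_ /allP h2] := h x (L_mem x); exact/eqP/h2/L_mem.
- move=> x; have /andP [h1 _] := h x (L_mem x); exact/negbTE.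
Qed.

Lemma omegaGH : omega_bullet eG = omega_bullet eH.
Proof.
apply: (cert_ok (c1 := cls shrik rook) (c2 := cls shrik shrik)).
have h : (let a1 := adj eG in let a2 := adj eH in
          cert a1 a2 (cls shrik rook) (cls shrik shrik)) = true by vm_compute.
exact: h.
Qed.

Lemma WLneq :
  (let a1 := adj eG in let a2 := adj eH in N.eqb (WL32SL a1) (WL32SL a2)) = false.
Proof. vm_compute. reflexivity. Qed.

Lemma neq_of (a b : N) : N.eqb a b = false -> a <> b.
Proof. by move=> h E; rewrite E N.eqb_refl in h. Qed.

Lemma WL32GH : WL32 eG <> WL32 eH.
Proof.
move=> E; apply: (@neq_of (sig (WL32 eG)) (sig (WL32 eH)) _ (congr1 sig E)).
rewrite (WL32SLE eG) (WL32SLE eH).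
exact: WLneq.
Qed.

Theorem theorem6p5 :
  exists (T1 T2 : finType) (e1 : rel T1) (e2 : rel T2),
    [/\ simple_graph e1, simple_graph e2,
        omega_bullet e1 = omega_bullet e2 &
        WL32 e1 <> WL32 e2].
Proof.
exists ('I_34 : finType), ('I_34 : finType), eG, eH; split.
- by apply: simple_check; vm_compute.
- by apply: simple_check; vm_compute.
- exact: omegaGH.
- exact: WL32GH.
Qed.
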